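(* Let $P$ be a set of $n$ points in general position in the plane such that the number $m$ of points of $P$ on the boundary of its convex hull satisfies $m\geq 6$. If $P$ has a good-triangle, then $\mu(D(P))\geq\binom{n}{2}-9$.
   Context: General position means no three points collinear. Let $\mathcal{P}$ be the set of all closed segments with both endpoints in $P$, and let $v_1,\dots,v_m$ be the points of $P$ on the boundary of the convex hull of $P$, in clockwise cyclic order, indices taken mod $m$. For a point $x\in P$ not on the convex hull boundary and $i\in[m]$, the triangle $\triangle$ with sides $xv_i$, $xv_{i+1}$, $v_iv_{i+1}$ is a good-triangle of $P$ if (i) $x$ lies in the interior of the quadrilateral $v_iv_{i+1}v_{i+2}v_{i+m-1}$, and (ii) every segment $uv\in\mathcal{P}$ other than the three sides of $\triangle$ that intersects all three sides of $\triangle$ belongs to $\{v_iv_{i+2},v_iv_{i+3},v_{i+1}v_{i+m-2},v_{i+1}v_{i+m-1}\}$. $D(P)$ is the graph with vertex set $\mathcal{P}$, two segments adjacent iff disjoint. For a graph $G$ and $U\subseteq V(G)$, two distinct vertices $x,y\in U$ are $U$-mutually visible if $G$ contains a shortest $x$-$y$ path none of whose internal vertices lies in $U$; $U$ is a mutual-visibility set if every two distinct vertices of $U$ are $U$-mutually visible. $\mu(G)$ is the maximum size of a mutual-visibility set of $G$. *)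

(* Defs.v *)
From HB Require Import structures.
From mathcomp Require Import all_boot all_order all_algebra.
From mathcomp Require Import boolp reals.
Set Implicit Arguments. Unset Strict Implicit. Unset Printing Implicit Defensive.
Import Order.TTheory GRing.Theory Num.Theory.
Local Open Scope ring_scope.

Section Geometry.
Variable R : realType.
Definition point := (R * R)%type.

(* > 0 iff a,b,c counterclockwise; = 0 iff collinear *)
Definition orient (a b c : point) : R :=
  (b.1 - a.1) * (c.2 - a.2) - (b.2 - a.2) * (c.1 - a.1).

(* interior of a subset of R^2 (standard topology, square neighbourhoods) *)
Definition interior2 (A : point -> Prop) (z : point) : Prop :=
  exists2 e : R, 0 < e & forall y : point,
    `|y.1 - z.1| < e -> `|y.2 - z.2| < e -> A y.

Variable n : nat.
Variable pt : 'I_n -> point.   (* the point set P = {pt i | i < n} *)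

Definition general_position : Prop :=
  forall i j k : 'I_n, i != j -> j != k -> i != k ->
    orient (pt i) (pt j) (pt k) != 0.

Definition conv (S : {set 'I_n}) (z : point) : Prop :=
  exists w : 'I_n -> R,
    [/\ forall i, 0 <= w i,
        forall i, i \notin S -> w i = 0,
        \sum_i w i = 1
      & z = (\sum_i w i * (pt i).1, \sum_i w i * (pt i).2)].

Definition on_hull_boundary (z : point) : Prop :=
  conv setT z /\ ~ interior2 (conv setT) z.

Definition hull_idx : {set 'I_n} := [set i | `[< on_hull_boundary (pt i) >]].

Definition cyc (v : nat -> 'I_n) (k : nat) : 'I_n := v (k %% #|hull_idx|)%N.

(* v_0, ..., v_{m-1} are the hull points, listed in clockwise cyclic order:
   each directed edge v_k v_{k+1} has all other points of P strictly on its right *)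
Definition clockwise_enum (v : nat -> 'I_n) : Prop :=
  let m := #|hull_idx| in
  [/\ forall k l, (k < m)%N -> (l < m)%N -> v k = v l -> k = l,
      forall k, (k < m)%N -> v k \in hull_idx
    & forall k (j : 'I_n), (k < m)%N -> j != cyc v k -> j != cyc v k.+1 ->
        orient (pt (cyc v k)) (pt (cyc v k.+1)) (pt j) < 0].

(* segments of P : two-element index sets; the closed segment is their hull *)
Definition segment := {s : {set 'I_n} | #|s| == 2%N}.

Definition meets (s t : {set 'I_n}) : Prop := exists z, conv s z /\ conv t z.

Definition seg_disjoint (s t : segment) : Prop := ~ meets (val s) (val t).

(* the triangle x v_i v_{i+1} is a good-triangle (indices from 0, mod m) *)
Definition good_triangle (v : nat -> 'I_n) (x : 'I_n) (i : nat) : Prop :=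
  let m := #|hull_idx| in
  let V k := cyc v (i + k) in
  [/\ x \notin hull_idx,
      interior2 (conv [set V 0%N; V 1%N; V 2%N; V (m - 1)%N]) (pt x)
    & forall s : segment,
        val s \notin [set [set x; V 0%N]; [set x; V 1%N]; [set V 0%N; V 1%N]] ->
        meets (val s) [set x; V 0%N] -> meets (val s) [set x; V 1%N] ->
        meets (val s) [set V 0%N; V 1%N] ->
        val s \in [set [set V 0%N; V 2%N]; [set V 0%N; V 3%N];
                       [set V 1%N; V (m - 2)%N]; [set V 1%N; V (m - 1)%N]]].

Definition has_good_triangle : Prop :=
  exists v x i, clockwise_enum v /\ good_triangle v x i.

End Geometry.

Section Visibility.
Variable T : finType.
Variable adj : T -> T -> Prop.

Fixpoint walk (x : T) (p : seq T) : Prop :=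
  match p with [::] => True | y :: q => adj x y /\ walk y q end.

(* x :: p is a path from x to y *)
Definition is_path (x y : T) (p : seq T) : Prop := walk x p /\ last x p = y.

Definition shortest_path (x y : T) (p : seq T) : Prop :=
  is_path x y p /\ forall q, is_path x y q -> (size p <= size q)%N.

Definition mutually_visible (U : {set T}) (x y : T) : Prop :=
  exists p, shortest_path x y p /\
    forall z, z \in behead (belast x p) -> z \notin U.

Definition mv_set (U : {set T}) : Prop :=
  forall x y, x \in U -> y \in U -> x != y -> mutually_visible U x y.

Definition mu : nat := \max_(U : {set T} | `[< mv_set U >]) #|U|.

End Visibility.

Definition Dgraph (R : realType) (n : nat) (pt : 'I_n -> point R) :=
  @seg_disjoint R n pt.

(* Main.v *)
Require Import Defs.
From mathcomp Require Import all_boot all_order all_algebra.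
From mathcomp Require Import boolp reals.
From mathcomp Require Import ring lra zify.
Set Implicit Arguments. Unset Strict Implicit. Unset Printing Implicit Defensive.
Import Order.TTheory GRing.Theory Num.Theory.
Local Open Scope ring_scope.

Section Basic.
Variable R : realType.
Implicit Types a b c d z o e u v w s t p q r : point R.

Lemma orC a b c : orient a b c = orient b c a.
Proof. rewrite /orient; ring. Qed.
Lemma orS a b c : orient a b c = - orient b a c.
Proof. rewrite /orient; ring. Qed.
Lemma orS2 a b c : orient a b c = - orient a c b.
Proof. rewrite /orient; ring. Qed.
Lemma or_aab a b : orient a b a = 0.
Proof. rewrite /orient; ring. Qed.
Lemma or_abb a b : orient a b b = 0.
Proof. rewrite /orient; ring. Qed.

(* angular transitivity around o, with reference ray o->e *)
Lemma or_trans o e u v w :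
  orient o u v < 0 -> orient o v w < 0 ->
  0 < - orient o e u -> 0 < - orient o e v -> 0 < - orient o e w ->
  orient o u w < 0.
Proof.
move=> h1 h2 f1 f2 f3.
have id : orient o u w * (- orient o e v) =
  orient o v w * (- orient o e u) + orient o u v * (- orient o e w).
  by rewrite /orient; ring.
have : orient o u w * (- orient o e v) < 0.
  rewrite id; nra.
nra.
Qed.

Lemma or_bary s t p q r w :
  orient s t w * orient p q r =
  orient s t p * orient w q r + orient s t q * orient p w r + orient s t r * orient p q w.
Proof. rewrite /orient; ring. Qed.

Variable n : nat.
Variable pt : 'I_n -> point R.

Lemma conv_affine (S : {set 'I_n}) z p q : conv pt S z ->
  exists w : 'I_n -> R, [/\ forall i, 0 <= w i, forall i, i \notin S -> w i = 0,
     \sum_i w i = 1 & orient p q z = \sum_i w i * orient p q (pt i)].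
Proof.
case=> w [w0 wS w1 ->]; exists w; split => //.
rewrite /orient /=.
set a1 := q.1 - p.1; set a2 := q.2 - p.2.
transitivity (a1 * (\sum_i w i * (pt i).2) - a2 * (\sum_i w i * (pt i).1)
   + (a2 * p.1 - a1 * p.2) * \sum_i w i).
  by rewrite w1; ring.
rewrite !mulr_sumr -sumrB -big_split /=; apply: eq_bigr => i _; ring.
Qed.

Lemma conv_le (S : {set 'I_n}) z p q : conv pt S z ->
  (forall k, k \in S -> orient p q (pt k) <= 0) -> orient p q z <= 0.
Proof.
move=> /(conv_affine p q) [w [w0 wS w1 ->]] h.
apply: sumr_le0 => i _.
case: (boolP (i \in S)) => iS; first by rewrite mulr_ge0_le0 // h.
by rewrite wS // mul0r.
Qed.

Lemma conv_lt (S : {set 'I_n}) z p q : conv pt S z ->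
  (forall k, k \in S -> orient p q (pt k) < 0) -> orient p q z < 0.
Proof.
move=> cz h.
have hle : orient p q z <= 0 by apply: conv_le cz _ => k /h /ltW.
rewrite lt_neqAle hle andbT; apply/eqP => e0.
move: cz => /(conv_affine p q) [w [w0 wS w1 e]].
have : \sum_i (- (w i * orient p q (pt i))) = 0 by rewrite sumrN -e e0 oppr0.
move/eqP; rewrite psumr_eq0; last first.
  move=> i _; rewrite oppr_ge0.
  case: (boolP (i \in S)) => iS; first by rewrite mulr_ge0_le0 // ltW // h.
  by rewrite wS // mul0r.
move=> /allP hall.
have wz : forall i, w i = 0.
  move=> i; case: (boolP (i \in S)) => iS; last by rewrite wS.
  have := hall i (mem_index_enum i); rewrite oppr_eq0 mulf_eq0 => /orP[/eqP //|/eqP hq].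
  by have := h i iS; rewrite hq ltxx.
by move: w1; rewrite big1 // => /eqP; rewrite eq_sym oner_eq0.
Qed.

Lemma conv_pt (S : {set 'I_n}) k : k \in S -> conv pt S (pt k).
Proof.
move=> kS; exists (fun i => if i == k then 1 else 0); split.
- by move=> i; case: eqP.
- by move=> i iS; case: eqP => // e; move: iS; rewrite e kS.
- by rewrite (bigD1 k) //= eqxx big1 ?addr0 // => i /negPf ->.
- rewrite [LHS]surjective_pairing; congr pair; rewrite (bigD1 k) //= eqxx mul1r big1 ?addr0 //;
    by move=> i /negPf ->; rewrite mul0r.
Qed.

Lemma conv2_line i j z : conv pt [set i; j] z -> orient (pt i) (pt j) z = 0.
Proof.
move=> cz; apply/eqP; rewrite eq_le; apply/andP; split.
  apply: conv_le cz _ => k; rewrite !inE => /orP[]/eqP->; rewrite ?or_aab ?or_abb //.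
rewrite -oppr_le0 orS opprK; apply: conv_le cz _ => k; rewrite !inE => /orP[]/eqP->;
  by rewrite ?or_abb ?or_aab.
Qed.

Lemma sep_lt i j (T : {set 'I_n}) :
  (forall k, k \in T -> orient (pt i) (pt j) (pt k) < 0) -> ~ meets pt [set i; j] T.
Proof.
move=> h [z [c1 c2]].
have := conv2_line c1; have := conv_lt c2 h; move=> a b; by rewrite b ltxx in a.
Qed.

Lemma sep_gt i j (T : {set 'I_n}) :
  (forall k, k \in T -> 0 < orient (pt i) (pt j) (pt k)) -> ~ meets pt [set i; j] T.
Proof.
move=> h; rewrite setUC; apply: sep_lt => k /h ?; rewrite orS; lra.
Qed.

Lemma meets_sym (S T : {set 'I_n}) : meets pt S T -> meets pt T S.
Proof. by case=> z [a b]; exists z. Qed.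

Lemma meets_common (S T : {set 'I_n}) k : k \in S -> k \in T -> meets pt S T.
Proof. by move=> a b; exists (pt k); split; apply: conv_pt. Qed.

Lemma meets_opp i j k l : meets pt [set i; j] [set k; l] ->
  orient (pt i) (pt j) (pt k) != 0 -> orient (pt i) (pt j) (pt l) != 0 ->
  orient (pt i) (pt j) (pt k) * orient (pt i) (pt j) (pt l) < 0.
Proof.
move=> hm hk hl.
case: (ltgtP (orient (pt i) (pt j) (pt k)) 0) => hk'; last by rewrite hk' eqxx in hk.
- case: (ltgtP (orient (pt i) (pt j) (pt l)) 0) => hl'; last by rewrite hl' eqxx in hl.
  + exfalso; apply: (sep_lt (T := [set k; l])) hm => u; by rewrite !inE => /orP[]/eqP->.
  + nra.
- case: (ltgtP (orient (pt i) (pt j) (pt l)) 0) => hl'; last by rewrite hl' eqxx in hl.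
  + nra.
  + exfalso; apply: (sep_gt (T := [set k; l])) hm => u; by rewrite !inE => /orP[]/eqP->.
Qed.

End Basic.

Section Meets.
Variable R : realType.
Variable n : nat.
Variable pt : 'I_n -> point R.
Implicit Types z : point R.

Lemma or_lin (A B P Q : point R) lam :
  orient A B ((1 - lam) * P.1 + lam * Q.1, (1 - lam) * P.2 + lam * Q.2) =
  (1 - lam) * orient A B P + lam * orient A B Q.
Proof. rewrite /orient /=; ring. Qed.

Lemma sum2 i j (a b : R) (c : 'I_n -> R) : i != j ->
  \sum_k (if k == i then a else if k == j then b else 0) * c k = a * c i + b * c j.
Proof.
move=> ij; rewrite (bigD1 i) //= eqxx (bigD1 j) /=; last by rewrite eq_sym.
rewrite eq_sym (negPf ij) eqxx big1 ?addr0 ?addrA //.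
by move=> k /andP[/negPf -> /negPf ->]; rewrite mul0r.
Qed.

Lemma sum2' i j (a b : R) : i != j ->
  \sum_(k : 'I_n) (if k == i then a else if k == j then b else 0) = a + b.
Proof.
move=> ij; rewrite (bigD1 i) //= eqxx (bigD1 j) /=; last by rewrite eq_sym.
rewrite eq_sym (negPf ij) eqxx big1 ?addr0 ?addrA //.
by move=> k /andP[/negPf -> /negPf ->].
Qed.

Lemma conv2_intro i j lam : i != j -> 0 <= lam -> lam <= 1 ->
  conv pt [set i; j] ((1 - lam) * (pt i).1 + lam * (pt j).1,
                      (1 - lam) * (pt i).2 + lam * (pt j).2).
Proof.
move=> ij l0 l1.
exists (fun k => if k == i then 1 - lam else if k == j then lam else 0); split.
- move=> k; case: eqP => _; first by rewrite subr_ge0.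
  by case: eqP.
- move=> k; rewrite !inE negb_or => /andP[/negPf -> /negPf ->] //.
- by rewrite sum2' // subrK.
- by congr pair; rewrite sum2.
Qed.

Lemma line_point (P Q z : point R) : P != Q -> orient P Q z = 0 ->
  exists lam, z = ((1 - lam) * P.1 + lam * Q.1, (1 - lam) * P.2 + lam * Q.2).
Proof.
move=> PQ e0.
set u1 := Q.1 - P.1; set u2 := Q.2 - P.2.
set d := u1 ^+ 2 + u2 ^+ 2.
have dnz : d != 0.
  have : (u1 != 0) || (u2 != 0).
    apply: contraR PQ; rewrite negb_or !negbK /u1 /u2 !subr_eq0 => /andP[/eqP a /eqP b].
    by apply/eqP; rewrite [P]surjective_pairing [Q]surjective_pairing a b.
  case/orP => h; rewrite /d; apply/lt0r_neq0.
    have : 0 < u1 ^+ 2 by rewrite exprn_even_gt0.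
    have : 0 <= u2 ^+ 2 by rewrite sqr_ge0.
    lra.
  have : 0 <= u1 ^+ 2 by rewrite sqr_ge0.
  have : 0 < u2 ^+ 2 by rewrite exprn_even_gt0.
  lra.
set num := (z.1 - P.1) * u1 + (z.2 - P.2) * u2.
have E1 : (z.1 - P.1) * d = num * u1 - u2 * orient P Q z.
  by rewrite /orient /num /d /u1 /u2; ring.
have E2 : (z.2 - P.2) * d = num * u2 + u1 * orient P Q z.
  by rewrite /orient /num /d /u1 /u2; ring.
rewrite e0 mulr0 ?subr0 ?addr0 in E1 E2.
exists (num / d).
rewrite [z]surjective_pairing; congr pair.
  have -> : z.1 = P.1 + (z.1 - P.1) * d / d by field.
  rewrite E1 /u1; field; done.
have -> : z.2 = P.2 + (z.2 - P.2) * d / d by field.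
rewrite E2 /u2; field; done.
Qed.

Lemma cross_line i j k l : k != l -> pt i != pt j ->
  orient (pt i) (pt j) (pt k) * orient (pt i) (pt j) (pt l) < 0 ->
  exists lam z, conv pt [set k; l] z /\
     z = ((1 - lam) * (pt i).1 + lam * (pt j).1, (1 - lam) * (pt i).2 + lam * (pt j).2).
Proof.
move=> kl PQ hp.
set A := orient (pt i) (pt j) (pt k); set B := orient (pt i) (pt j) (pt l).
move: hp; rewrite -/A -/B => hp.
have dnz : B - A != 0.
  apply/eqP => h; have eAB : B = A by lra.
  rewrite eAB in hp; nra.
set al := B / (B - A).
have al0 : 0 <= al /\ al <= 1.
  rewrite /al; have [hA|hA] : A < 0 \/ 0 < A.
    by case: (ltgtP A 0) => h; [left|right|move: hp; rewrite h mul0r ltxx].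
  - have hB : 0 < B by nra.
    split; first by apply: divr_ge0; lra.
    by rewrite ler_pdivrMr; lra.
  - have hB : B < 0 by nra.
    split; first by rewrite -mulrNN -invrN; apply: divr_ge0; lra.
    by rewrite -mulrNN -invrN ler_pdivrMr; lra.
case: al0 => al0 al1.
have hc := @conv2_intro k l (1 - al) kl ltac:(lra) ltac:(lra).
have hz : orient (pt i) (pt j) ((1 - (1 - al)) * (pt k).1 + (1 - al) * (pt l).1,
                   (1 - (1 - al)) * (pt k).2 + (1 - al) * (pt l).2) = 0.
  rewrite or_lin -/A -/B /al; field; done.
have [lam hl] := line_point PQ hz.
by exists lam; eexists; split; [exact: hc| exact: hl].
Qed.

Lemma meets_signs i j k l : i != j -> k != l -> pt i != pt j ->
  orient (pt i) (pt j) (pt k) * orient (pt i) (pt j) (pt l) < 0 ->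
  orient (pt k) (pt l) (pt i) * orient (pt k) (pt l) (pt j) < 0 ->
  meets pt [set i; j] [set k; l].
Proof.
move=> ij kl PQ h1 h2.
have [lam [z [cz ez]]] := cross_line kl PQ h1.
have h0 := conv2_line cz.
rewrite ez or_lin in h0.
set A := orient (pt k) (pt l) (pt i) in h0 h2; set B := orient (pt k) (pt l) (pt j) in h0 h2.
have e : lam * (B - A) = - A by lra.
have [l0 l1] : 0 <= lam /\ lam <= 1.
  have [hA|hA] : A < 0 \/ 0 < A.
    by case: (ltgtP A 0) => h; [left|right|move: h2; rewrite h mul0r ltxx].
  - have hB : 0 < B by nra.
    split; rewrite leNgt; apply/negP => hl; nra.
  - have hB : B < 0 by nra.
    split; rewrite leNgt; apply/negP => hl; nra.
exists z; split => //; rewrite ez; exact: conv2_intro.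
Qed.

Lemma meets_chord i j k l (A1 A2 B1 B2 : point R) : i != j -> k != l -> pt i != pt j ->
  orient (pt i) (pt j) (pt k) * orient (pt i) (pt j) (pt l) < 0 ->
  orient A1 A2 (pt i) = 0 -> orient A1 A2 (pt j) < 0 ->
  orient A1 A2 (pt k) <= 0 -> orient A1 A2 (pt l) <= 0 ->
  orient B1 B2 (pt j) = 0 -> orient B1 B2 (pt i) < 0 ->
  orient B1 B2 (pt k) <= 0 -> orient B1 B2 (pt l) <= 0 ->
  meets pt [set i; j] [set k; l].
Proof.
move=> ij kl PQ h1 a1 a2 a3 a4 b1 b2 b3 b4.
have [lam [z [cz ez]]] := cross_line kl PQ h1.
have fa : orient A1 A2 z <= 0.
  by apply: conv_le cz _ => u; rewrite !inE => /orP[]/eqP->.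
have fb : orient B1 B2 z <= 0.
  by apply: conv_le cz _ => u; rewrite !inE => /orP[]/eqP->.
rewrite ez or_lin a1 in fa.
rewrite ez or_lin b1 in fb.
have [l0 l1] : 0 <= lam /\ lam <= 1 by split; nra.
exists z; split => //; rewrite ez; exact: conv2_intro.
Qed.

End Meets.

Section Interior.
Variable R : realType.
Variable n : nat.
Variable pt : 'I_n -> point R.

Lemma interior_strict (S : {set 'I_n}) (z p q : point R) : p != q ->
  interior2 (conv pt S) z -> (forall k, k \in S -> orient p q (pt k) <= 0) ->
  orient p q z < 0.
Proof.
move=> pq [e e0 he] hS.
set u1 := q.1 - p.1; set u2 := q.2 - p.2.
set d := u1 ^+ 2 + u2 ^+ 2.
have d0 : 0 < d.
  have : (u1 != 0) || (u2 != 0).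
    apply: contraR pq; rewrite negb_or !negbK /u1 /u2 !subr_eq0 => /andP[/eqP a /eqP b].
    by apply/eqP; rewrite [p]surjective_pairing [q]surjective_pairing a b.
  case/orP => h; rewrite /d.
    have : 0 < u1 ^+ 2 by rewrite exprn_even_gt0.
    have : 0 <= u2 ^+ 2 by rewrite sqr_ge0.
    lra.
  have : 0 <= u1 ^+ 2 by rewrite sqr_ge0.
  have : 0 < u2 ^+ 2 by rewrite exprn_even_gt0.
  lra.
set M := 1 + `|u1| + `|u2|.
have M0 : 0 < M by rewrite /M; have := normr_ge0 u1; have := normr_ge0 u2; lra.
set dl := e / (2 * M).
have dl0 : 0 < dl by rewrite /dl divr_gt0 // mulr_gt0.
have key : forall u, `|u| < M -> `|dl * u| < e.
  move=> u hu; rewrite normrM (gtr0_norm dl0) /dl.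
  rewrite mulrAC ltr_pdivrMr ?mulr_gt0 //.
  have : 0 <= `|u| by [].
  nra.
set y : point R := (z.1 - dl * u2, z.2 + dl * u1).
have cy : conv pt S y.
  apply: he.
    rewrite /y /= addrAC subrr add0r normrN; apply: key.
    by rewrite /M; have := normr_ge0 u1; lra.
  rewrite /y /= addrAC subrr add0r; apply: key.
  by rewrite /M; have := normr_ge0 u2; lra.
have := conv_le cy hS.
have -> : orient p q y = orient p q z + dl * d.
  by rewrite /orient /y /d /u1 /u2 /=; ring.
have : 0 < dl * d by apply: mulr_gt0.
lra.
Qed.

End Interior.

Section Hull.
Variable R : realType.
Variable n : nat.
Variable pt : 'I_n -> point R.
Variable v : nat -> 'I_n.
Hypothesis cw : clockwise_enum pt v.
Hypothesis m6 : (6 <= #|hull_idx pt|)%N.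
Local Notation m := #|hull_idx pt|.
Local Notation W := (cyc pt v).

Lemma m0 : (0 < m)%N.
Proof. by apply: leq_trans m6. Qed.

Lemma W_inj k l : W k = W l -> (k %% m = l %% m)%N.
Proof.
case: cw => h1 _ _; rewrite /cyc => e.
by apply: h1 => //; rewrite ltn_pmod // m0.
Qed.

Lemma W_hull k : W k \in hull_idx pt.
Proof. by case: cw => _ h2 _; rewrite /cyc; apply: h2; rewrite ltn_pmod // m0. Qed.

Lemma W_edge k j : j != W k -> j != W k.+1 ->
  orient (pt (W k)) (pt (W k.+1)) (pt j) < 0.
Proof.
case: cw => _ _ h3 a b.
have e1 : cyc pt v (k %% m)%N = W k by rewrite /cyc modn_mod.
have e2 : cyc pt v (k %% m)%N.+1 = W k.+1.
  by rewrite /cyc -addn1 modnDml addn1.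
have := h3 (k %% m)%N j; rewrite e1 e2; apply => //.
by rewrite ltn_pmod // m0.
Qed.

Lemma W_neq r a b : (a < m)%N -> (b < m)%N -> a != b -> W (r + a) != W (r + b).
Proof.
move=> am bm ab; apply/eqP => /W_inj /eqP; rewrite eqn_modDl !modn_small //.
by move/eqP => e; rewrite e eqxx in ab.
Qed.

Lemma conv3_gen r j k : (0 < j)%N -> (j < k)%N -> (k < m)%N ->
  orient (pt (W r)) (pt (W (r + j))) (pt (W (r + k)))< 0.
Proof.
move=> j0 jk km.
have Wr : W r = W (r + 0) by rewrite addn0.
elim: k jk km => [//|k IH] jk km.
have base : forall a, (0 < a)%N -> (a.+1 < m)%N ->
    orient (pt (W r)) (pt (W (r + a))) (pt (W (r + a.+1))) < 0.
  move=> a a0 am.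
  rewrite orC addnS; apply: W_edge.
    by rewrite Wr; apply: W_neq; have := m0; lia.
  by rewrite Wr -addnS; apply: W_neq; have := m0; lia.
case: (ltngtP j k) => hjk; last first.
- by move: km; rewrite -hjk => km; apply: base.
- by rewrite ltnS leqNgt hjk in jk.
have IH' := IH hjk (ltn_trans (ltnSn k) km).
have bk := base k (ltn_trans j0 hjk) km.
have m1 := m0.
case: (eqVneq j 1%N) => [j1|j1].
  rewrite j1 addn1; apply: W_edge.
    by rewrite Wr; apply: W_neq; lia.
  by rewrite -(addn1 r); apply: W_neq; lia.
have hpos : forall a, (1 < a)%N -> (a < m)%N -> 0 < - orient (pt (W r)) (pt (W r.+1)) (pt (W (r + a))).
  move=> a a1 am; rewrite oppr_gt0; apply: W_edge.
    by rewrite Wr; apply: W_neq; lia.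
  by rewrite -(addn1 r); apply: W_neq; lia.
apply: (or_trans (e := pt (W r.+1))) IH' bk _ _ _; apply: hpos; lia.
Qed.

End Hull.

Section Main.
Variable R : realType.
Variable n : nat.
Variable pt : 'I_n -> point R.
Hypothesis inj : injective pt.
Hypothesis gp : general_position pt.
Variable v : nat -> 'I_n.
Hypothesis cw : clockwise_enum pt v.
Hypothesis m6 : (6 <= #|hull_idx pt|)%N.
Variable x : 'I_n.
Variable i : nat.
Hypothesis gt : good_triangle pt v x i.

Local Notation m := #|hull_idx pt|.
Local Notation V k := (cyc pt v (i + k)).
Local Notation O p q r := (orient (pt p) (pt q) (pt r)).

Lemma Vneq a b : (a < m)%N -> (b < m)%N -> a != b -> V a != V b.
Proof. exact: W_neq. Qed.

Lemma xV k : x != V k.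
Proof.
case: gt => xh _ _; apply/eqP => e.
by move: xh; rewrite e (W_hull cw m6).
Qed.

Lemma conv3V a b c : (a < b)%N -> (b < c)%N -> (c < m)%N -> O (V a) (V b) (V c) < 0.
Proof.
move=> ab bc cm.
have := conv3_gen cw m6 (i + a) (j := b - a) (k := c - a).
rewrite -!addnA !subnKC ?(ltnW ab) ?(ltnW (ltn_trans ab bc)) //; apply; lia.
Qed.

Lemma edgeV k j : j != V k -> j != V k.+1 -> O (V k) (V k.+1) j < 0.
Proof. by move=> h1 h2; rewrite addnS; apply: W_edge => //; rewrite -addnS. Qed.

Lemma Vm : V m = V 0.
Proof. by rewrite /cyc addn0 modnDr. Qed.

Lemma gpO p q r : p != q -> q != r -> p != r -> O p q r != 0.
Proof. exact: gp. Qed.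

Lemma ptneq p q : p != q -> pt p != pt q.
Proof. by apply: contra => /eqP /inj ->. Qed.


Lemma dV0_1 : (V 0 == V 1) = false.
Proof. by apply/negbTE; apply: Vneq; lia. Qed.
Lemma dV1_0 : (V 1 == V 0) = false.
Proof. by rewrite eq_sym dV0_1. Qed.
Lemma dV0_2 : (V 0 == V 2) = false.
Proof. by apply/negbTE; apply: Vneq; lia. Qed.
Lemma dV2_0 : (V 2 == V 0) = false.
Proof. by rewrite eq_sym dV0_2. Qed.
Lemma dV0_3 : (V 0 == V 3) = false.
Proof. by apply/negbTE; apply: Vneq; lia. Qed.
Lemma dV3_0 : (V 3 == V 0) = false.
Proof. by rewrite eq_sym dV0_3. Qed.
Lemma dV0_4 : (V 0 == V 4) = false.
Proof. by apply/negbTE; apply: Vneq; lia. Qed.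
Lemma dV4_0 : (V 4 == V 0) = false.
Proof. by rewrite eq_sym dV0_4. Qed.
Lemma dV0_d2 : (V 0 == V (m - 2)) = false.
Proof. by apply/negbTE; apply: Vneq; lia. Qed.
Lemma dVd2_0 : (V (m - 2) == V 0) = false.
Proof. by rewrite eq_sym dV0_d2. Qed.
Lemma dV0_d1 : (V 0 == V (m - 1)) = false.
Proof. by apply/negbTE; apply: Vneq; lia. Qed.
Lemma dVd1_0 : (V (m - 1) == V 0) = false.
Proof. by rewrite eq_sym dV0_d1. Qed.
Lemma dV1_2 : (V 1 == V 2) = false.
Proof. by apply/negbTE; apply: Vneq; lia. Qed.
Lemma dV2_1 : (V 2 == V 1) = false.
Proof. by rewrite eq_sym dV1_2. Qed.
Lemma dV1_3 : (V 1 == V 3) = false.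
Proof. by apply/negbTE; apply: Vneq; lia. Qed.
Lemma dV3_1 : (V 3 == V 1) = false.
Proof. by rewrite eq_sym dV1_3. Qed.
Lemma dV1_4 : (V 1 == V 4) = false.
Proof. by apply/negbTE; apply: Vneq; lia. Qed.
Lemma dV4_1 : (V 4 == V 1) = false.
Proof. by rewrite eq_sym dV1_4. Qed.
Lemma dV1_d2 : (V 1 == V (m - 2)) = false.
Proof. by apply/negbTE; apply: Vneq; lia. Qed.
Lemma dVd2_1 : (V (m - 2) == V 1) = false.
Proof. by rewrite eq_sym dV1_d2. Qed.
Lemma dV1_d1 : (V 1 == V (m - 1)) = false.
Proof. by apply/negbTE; apply: Vneq; lia. Qed.
Lemma dVd1_1 : (V (m - 1) == V 1) = false.
Proof. by rewrite eq_sym dV1_d1. Qed.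
Lemma dV2_3 : (V 2 == V 3) = false.
Proof. by apply/negbTE; apply: Vneq; lia. Qed.
Lemma dV3_2 : (V 3 == V 2) = false.
Proof. by rewrite eq_sym dV2_3. Qed.
Lemma dV2_4 : (V 2 == V 4) = false.
Proof. by apply/negbTE; apply: Vneq; lia. Qed.
Lemma dV4_2 : (V 4 == V 2) = false.
Proof. by rewrite eq_sym dV2_4. Qed.
Lemma dV2_d2 : (V 2 == V (m - 2)) = false.
Proof. by apply/negbTE; apply: Vneq; lia. Qed.
Lemma dVd2_2 : (V (m - 2) == V 2) = false.
Proof. by rewrite eq_sym dV2_d2. Qed.
Lemma dV2_d1 : (V 2 == V (m - 1)) = false.
Proof. by apply/negbTE; apply: Vneq; lia. Qed.
Lemma dVd1_2 : (V (m - 1) == V 2) = false.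
Proof. by rewrite eq_sym dV2_d1. Qed.
Lemma dV3_4 : (V 3 == V 4) = false.
Proof. by apply/negbTE; apply: Vneq; lia. Qed.
Lemma dV4_3 : (V 4 == V 3) = false.
Proof. by rewrite eq_sym dV3_4. Qed.
Lemma dV3_d2 : (V 3 == V (m - 2)) = false.
Proof. by apply/negbTE; apply: Vneq; lia. Qed.
Lemma dVd2_3 : (V (m - 2) == V 3) = false.
Proof. by rewrite eq_sym dV3_d2. Qed.
Lemma dV3_d1 : (V 3 == V (m - 1)) = false.
Proof. by apply/negbTE; apply: Vneq; lia. Qed.
Lemma dVd1_3 : (V (m - 1) == V 3) = false.
Proof. by rewrite eq_sym dV3_d1. Qed.
Lemma dV4_d1 : (V 4 == V (m - 1)) = false.
Proof. by apply/negbTE; apply: Vneq; lia. Qed.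
Lemma dVd1_4 : (V (m - 1) == V 4) = false.
Proof. by rewrite eq_sym dV4_d1. Qed.
Lemma dVd2_d1 : (V (m - 2) == V (m - 1)) = false.
Proof. by apply/negbTE; apply: Vneq; lia. Qed.
Lemma dVd1_d2 : (V (m - 1) == V (m - 2)) = false.
Proof. by rewrite eq_sym dVd2_d1. Qed.
Lemma dx_0 : (x == V 0) = false.
Proof. exact/negbTE/xV. Qed.
Lemma d0_x : (V 0 == x) = false.
Proof. by rewrite eq_sym dx_0. Qed.
Lemma dx_1 : (x == V 1) = false.
Proof. exact/negbTE/xV. Qed.
Lemma d1_x : (V 1 == x) = false.
Proof. by rewrite eq_sym dx_1. Qed.
Lemma dx_2 : (x == V 2) = false.
Proof. exact/negbTE/xV. Qed.
Lemma d2_x : (V 2 == x) = false.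
Proof. by rewrite eq_sym dx_2. Qed.
Lemma dx_3 : (x == V 3) = false.
Proof. exact/negbTE/xV. Qed.
Lemma d3_x : (V 3 == x) = false.
Proof. by rewrite eq_sym dx_3. Qed.
Lemma dx_4 : (x == V 4) = false.
Proof. exact/negbTE/xV. Qed.
Lemma d4_x : (V 4 == x) = false.
Proof. by rewrite eq_sym dx_4. Qed.
Lemma dx_d2 : (x == V (m - 2)) = false.
Proof. exact/negbTE/xV. Qed.
Lemma dd2_x : (V (m - 2) == x) = false.
Proof. by rewrite eq_sym dx_d2. Qed.
Lemma dx_d1 : (x == V (m - 1)) = false.
Proof. exact/negbTE/xV. Qed.
Lemma dd1_x : (V (m - 1) == x) = false.
Proof. by rewrite eq_sym dx_d1. Qed.

Definition distE := (dV0_1, dV1_0, dV0_2, dV2_0, dV0_3, dV3_0, dV0_4, dV4_0, dV0_d2, dVd2_0, dV0_d1, dVd1_0, dV1_2, dV2_1, dV1_3, dV3_1, dV1_4, dV4_1, dV1_d2, dVd2_1, dV1_d1, dVd1_1, dV2_3, dV3_2, dV2_4, dV4_2, dV2_d2, dVd2_2, dV2_d1, dVd1_2, dV3_4, dV4_3, dV3_d2, dVd2_3, dV3_d1, dVd1_3, dV4_d1, dVd1_4, dVd2_d1, dVd1_d2, dx_0, d0_x, dx_1, d1_x, dx_2, d2_x, dx_3, d3_x, dx_4, d4_x, dx_d2, dd2_x, dx_d1, dd1_x).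

Ltac neqV := rewrite ?eqxx ?distE; repeat match goal with
 | H : is_true (?a != ?b) |- context[?a == ?b] => rewrite (negPf H)
 | H : is_true (?a != ?b) |- context[?b == ?a] => rewrite [b == a]eq_sym (negPf H)
 end.

Definition Eseq : seq {set 'I_n} :=
  [:: [set x; V 0]; [set x; V 1]; [set V 0; V 1]; [set V 0; V 2]; [set V 0; V 3];
      [set V 1; V (m - 2)]; [set V 1; V (m - 1)]; [set V 2; V 3]; [set V (m - 2); V (m - 1)]].

Lemma ii' p q : p != q -> [set p; q] \notin Eseq ->
  meets pt [set p; q] [set x; V 0] -> meets pt [set p; q] [set x; V 1] ->
  meets pt [set p; q] [set V 0; V 1] -> False.
Proof.
move=> pq hE h1 h2 h3.
have c2 : #|[set p; q]| == 2%N by rewrite cards2 pq.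
case: gt => _ _ /(_ (Sub [set p; q] c2)) /=.
rewrite /= => h.
have : [set p; q] \notin [set [set x; V 0]; [set x; V 1]; [set V 0; V 1]].
  apply/negP => H; move/negP: hE; apply; move: H.
  rewrite !inE => /orP[/orP[]|] /eqP ->; by rewrite /Eseq ?inE eqxx ?orbT.
move=> hn; move/negP: hE; apply; move: (h hn h1 h2 h3); rewrite !inE => /orP[/orP[/orP[]|]|] /eqP ->;
  by rewrite /Eseq ?inE eqxx ?orbT.
Qed.

Lemma notinE p q : (forall e, e \in Eseq -> ~~ ((p \in e) && (q \in e))) -> [set p; q] \notin Eseq.
Proof. by move=> h; apply/negP => /h; rewrite !inE !eqxx ?orbT. Qed.

Ltac notinE_tac :=
  apply: notinE => e; rewrite /Eseq !inE;
  repeat (case/orP; [move/eqP->; rewrite !inE; neqV; rewrite ?eqxx ?andbF ?orbF //|]);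
  move/eqP->; rewrite !inE; neqV; rewrite ?eqxx ?andbF ?orbF //.

Lemma test_notin w : w != x -> w != V 0 -> w != V (m - 2) -> w != V (m - 1) -> w != V 1 ->
  [set V 1; w] \notin Eseq.
Proof. move=> *. notinE_tac. Qed.

Lemma quad_lt j k : (j == 2%N) || (j == 3%N) -> (k == m - 2)%N || (k == m - 1)%N ->
  O (V j) (V k) x < 0.
Proof.
move=> hj hk; case: gt => _ hint _.
case/orP: hj => /eqP ->; case/orP: hk => /eqP -> ;
 (apply: (interior_strict _ hint); [by apply: ptneq; apply: Vneq; lia|]);
 move=> p; rewrite !inE => /orP[/orP[/orP[]|]|] /eqP ->;
 rewrite ?or_aab ?or_abb //; apply/ltW;
 first [apply: conv3V; lia | rewrite orC; apply: conv3V; lia | rewrite -orC; apply: conv3V; lia].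
Qed.


Ltac nlia := first [ match goal with H : is_true (_ < _ < _)%N |- _ => clear - m6 H; lia end
                   | clear - m6; lia ].
Ltac nz := apply: gpO; neqV; done.
Ltac dst := neqV; done.

Lemma alpha j k : (j == 2%N) || (j == 3%N) -> (k == m - 2)%N || (k == m - 1)%N ->
  ~ meets pt [set V j; V k] [set x; V 0] /\ ~ meets pt [set V j; V k] [set x; V 1].
Proof.
move=> hj hk.
have jm : (0 < j < k)%N /\ (k < m)%N by case/orP: hj => /eqP ->; case/orP: hk => /eqP ->; lia.
case: jm => /andP[j0 jk] km.
split; apply: sep_lt => p; rewrite !inE => /orP[]/eqP->; try exact: quad_lt.
  by rewrite -orC; apply: conv3V.
by rewrite -orC; apply: conv3V; lia.
Qed.

Lemma edge_disj k p q : p != V k -> p != V k.+1 -> q != V k -> q != V k.+1 ->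
  ~ meets pt [set V k; V k.+1] [set p; q].
Proof.
move=> *; apply: sep_lt => u; rewrite !inE => /orP[]/eqP->; exact: edgeV.
Qed.

Lemma Ga_side : ~ meets pt [set V 0; V (m - 2)] [set x; V 1] -> 0 < O (V 0) (V (m - 2)) x.
Proof.
move=> H.
have n0 : O (V 0) (V (m - 2)) x != 0 by nz.
have h1 : 0 < O (V 0) (V (m - 2)) (V 1).
  rewrite orS2 oppr_gt0; apply: conv3V; lia.
have em : (m - 2).+1 = (m - 1)%N by lia.
case: (ltgtP (O (V 0) (V (m - 2)) x) 0) => // hx; last by rewrite hx eqxx in n0.
exfalso; apply: H.
apply: (meets_chord (A1 := pt (V 0)) (A2 := pt (V 1)) (B1 := pt (V (m - 2))) (B2 := pt (V (m - 1)))).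
- by dst.
- by dst.
- by apply: ptneq; dst.
- nra.
- by rewrite or_aab.
- apply: conv3V; lia.
- apply/ltW; rewrite -(addn1 0); apply: edgeV; dst.
- by rewrite or_abb.
- by rewrite or_aab.
- rewrite -em; apply: edgeV; rewrite ?em; dst.
- apply/ltW; rewrite -em; apply: edgeV; rewrite ?em; dst.
- apply/ltW; rewrite -em; apply: edgeV; rewrite ?em; dst.
Qed.

Lemma Gb_side : ~ meets pt [set V 1; V 3] [set x; V 0] -> O (V 1) (V 3) x < 0.
Proof.
move=> H.
have n0 : O (V 1) (V 3) x != 0 by nz.
have h1 : O (V 1) (V 3) (V 0) < 0 by rewrite -orC; apply: conv3V; lia.
case: (ltgtP (O (V 1) (V 3) x) 0) => // hx; last by rewrite hx eqxx in n0.
exfalso; apply: H.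
apply: (meets_chord (A1 := pt (V 0)) (A2 := pt (V 1)) (B1 := pt (V 3)) (B2 := pt (V 4))).
- by dst.
- by dst.
- by apply: ptneq; dst.
- nra.
- by rewrite or_abb.
- apply: conv3V; lia.
- apply/ltW; rewrite -(addn1 0); apply: edgeV; dst.
- by rewrite or_aab.
- by rewrite or_aab.
- apply: (@edgeV 3); dst.
- apply/ltW; apply: (@edgeV 3); dst.
- apply/ltW; apply: (@edgeV 3); dst.
Qed.


Ltac oreq := rewrite /orient; ring.

Lemma G_a j w : (j == 2%N) || (j == 3%N) ->
  w != V 0 -> w != V 1 -> w != V (m - 2) -> w != V (m - 1) -> w != V 2 -> w != V 3 ->
  ~ meets pt [set V 0; V (m - 2)] [set x; V 1] ->
  meets pt [set V j; w] [set x; V 1] -> meets pt [set V j; w] [set V 0; V (m - 2)] -> False.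
Proof.
move=> hj w0 w1 wd2 wd1 w2 w3 H HB HT.
have jm : (1 < j < 4)%N by case/orP: hj => /eqP ->.
have wj : w != V j by case/orP: hj => /eqP ->.
have j0 : V j != V 0 by apply: Vneq; nlia.
have j1 : V j != V 1 by apply: Vneq; nlia.
have jd2 : V j != V (m - 2) by apply: Vneq; nlia.
have jd1 : V j != V (m - 1) by apply: Vneq; nlia.
have jx : V j != x by rewrite eq_sym xV.
have hx := Ga_side H.
have hVj : 0 < O (V 0) (V (m - 2)) (V j).
  rewrite orS2 oppr_gt0; apply: conv3V; nlia.
case: (eqVneq w x) => [wx|wx].
  apply: (sep_gt (i := V 0) (j := V (m - 2)) (T := [set V j; w])); last exact: meets_sym HT.
  by move=> u; rewrite !inE => /orP[]/eqP->; rewrite ?wx.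
have hw : O (V 0) (V (m - 2)) w < 0.
  have hT : O (V 0) (V (m - 2)) (V j) * O (V 0) (V (m - 2)) w < 0.
    by have := meets_opp (meets_sym HT); apply; nz.
  by move: hT; rewrite pmulr_rlt0.
have hB : O x (V 1) (V j) * O x (V 1) w < 0.
  by have := meets_opp (meets_sym HB); apply; nz.
have nxbw : O x (V 1) w != 0 by nz.
have em : (m - 2).+1 = (m - 1)%N by nlia.
case: (ltgtP (O x (V 1) w) 0) => hxbw; last by rewrite hxbw eqxx in nxbw.
-
  have hxbj : 0 < O x (V 1) (V j) by move: hB; rewrite nmulr_llt0.
  have hbd2w : O (V 1) (V (m - 2)) w < 0.
    have id := or_bary (pt (V 1)) (pt (V (m - 2))) (pt (V 0)) (pt (V (m - 2))) (pt (V (m - 1))) (pt w).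
    rewrite or_abb mul0r addr0 in id.
    have s1 : O (V 0) (V (m - 2)) (V (m - 1)) < 0 by apply: conv3V; nlia.
    have s2 : O (V 1) (V (m - 2)) (V 0) < 0 by rewrite -orC; apply: conv3V; nlia.
    have s3 : orient (pt w) (pt (V (m - 2))) (pt (V (m - 1))) < 0.
      by rewrite orC -em; apply: edgeV; rewrite ?em; dst.
    have s4 : O (V 1) (V (m - 2)) (V (m - 1)) < 0 by apply: conv3V; nlia.
    have p1 : 0 < O (V 1) (V (m - 2)) (V 0) * orient (pt w) (pt (V (m - 2))) (pt (V (m - 1))).
      by rewrite nmulr_rgt0.
    have p2 : 0 < O (V 1) (V (m - 2)) (V (m - 1)) * O (V 0) (V (m - 2)) w.
      by rewrite nmulr_rgt0.
    have : 0 < O (V 1) (V (m - 2)) w * O (V 0) (V (m - 2)) (V (m - 1)).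
      by rewrite id; apply: addr_gt0.
    by rewrite nmulr_lgt0.
  case/orP: hj => /eqP ej; rewrite ej in hxbj.
    have : O (V 1) (V 2) x < 0 by apply: (@edgeV 1); dst.
    have : O x (V 1) (V 2) = O (V 1) (V 2) x by oreq.
    lra.
  have f : forall u, u != V 1 -> u != V 2 -> 0 < - O (V 1) (V 2) u.
    by move=> u u1 u2; rewrite oppr_gt0; apply: (@edgeV 1).
  have hb3w : O (V 1) (V 3) w < 0.
    apply: (or_trans (e := pt (V 2))) (conv3V _ _ _) hbd2w _ _ _; try nlia.
    - apply: f; dst.
    - apply: f; dst.
    - apply: f; dst.
  have hbx3 : O (V 1) x (V 3) < 0.
    have : O x (V 1) (V 3) = - O (V 1) x (V 3) by oreq.
    lra.
  have := or_trans (e := pt (V 2)) hbx3 hb3w ltac:(apply: f; dst) ltac:(apply: f; dst) ltac:(apply: f; dst).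
  have : O x (V 1) w = - O (V 1) x w by oreq.
  lra.
-
  have f : forall u, u != V 0 -> u != V 1 -> 0 < - O (V 0) (V 1) u.
    by move=> u u1 u2; rewrite oppr_gt0; apply: (@edgeV 0).
  have haxw : O (V 0) x w < 0.
    apply: (or_trans (e := pt (V 1)) (v := pt (V (m - 2)))) hw _ _ _.
    - have : O (V 0) x (V (m - 2)) = - O (V 0) (V (m - 2)) x by oreq.
      lra.
    - apply: f; dst.
    - apply: f; dst.
    - apply: f; dst.
  apply: (@ii' (V 1) w); first by dst.
  - by notinE_tac.
  - apply: meets_signs; first by dst.
    + by dst.
    + by apply: ptneq; dst.
    + have -> : O (V 1) w x = O x (V 1) w by oreq.
      have -> : O (V 1) w (V 0) = O (V 0) (V 1) w by oreq.
      by rewrite pmulr_rlt0 //; apply: (@edgeV 0); dst.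
    + have -> : O x (V 0) (V 1) = O (V 0) (V 1) x by oreq.
      have -> : O x (V 0) w = - O (V 0) x w by oreq.
      rewrite nmulr_rlt0 ?oppr_gt0 //; apply: (@edgeV 0); dst.
  - by apply: (@meets_common _ _ pt _ _ (V 1)); rewrite !inE eqxx ?orbT.
  - by apply: (@meets_common _ _ pt _ _ (V 1)); rewrite !inE eqxx ?orbT.
Qed.


Lemma G_b k w : (k == m - 2)%N || (k == m - 1)%N ->
  w != V 0 -> w != V 1 -> w != V (m - 2) -> w != V (m - 1) -> w != V 2 -> w != V 3 ->
  ~ meets pt [set V 1; V 3] [set x; V 0] ->
  meets pt [set V k; w] [set x; V 0] -> meets pt [set V k; w] [set V 1; V 3] -> False.
Proof.
move=> hk w0 w1 wd2 wd1 w2 w3 H HA HT.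
have km : (3 < k < m)%N by case/orP: hk => /eqP ->; nlia.
have wk : w != V k by case/orP: hk => /eqP ->.
have k0 : V k != V 0 by apply: Vneq; nlia.
have k1 : V k != V 1 by apply: Vneq; nlia.
have k2 : V k != V 2 by apply: Vneq; nlia.
have k3 : V k != V 3 by apply: Vneq; nlia.
have kx : V k != x by rewrite eq_sym xV.
have hx := Gb_side H.
have hVk : O (V 1) (V 3) (V k) < 0 by apply: conv3V; nlia.
case: (eqVneq w x) => [wx|wx].
  apply: (sep_lt (i := V 1) (j := V 3) (T := [set V k; w])); last exact: meets_sym HT.
  by move=> u; rewrite !inE => /orP[]/eqP->; rewrite ?wx.
have hw : 0 < O (V 1) (V 3) w.
  have hT' : O (V 1) (V 3) (V k) * O (V 1) (V 3) w < 0.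
    by have := meets_opp (meets_sym HT); apply; nz.
  by move: hT'; rewrite nmulr_rlt0.
have hA : O x (V 0) (V k) * O x (V 0) w < 0.
  by have := meets_opp (meets_sym HA); apply; nz.
have nxaw : O x (V 0) w != 0 by nz.
case: (ltgtP (O x (V 0) w) 0) => hxaw; last by rewrite hxaw eqxx in nxaw.
- (* O(x,a,w) < 0 : [a,w] meets B *)
  have f : forall u, u != V 1 -> u != V 2 -> 0 < - O (V 1) (V 2) u.
    by move=> u u1 u2; rewrite oppr_gt0; apply: (@edgeV 1).
  have hbwx : O (V 1) w x < 0.
    apply: (or_trans (e := pt (V 2)) (v := pt (V 3))) hx _ _ _.
    - have -> : O (V 1) w (V 3) = - O (V 1) (V 3) w by oreq.
      by rewrite oppr_lt0.
    - apply: f; dst.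
    - apply: f; dst.
    - apply: f; dst.
  apply: (@ii' (V 0) w); first by dst.
  - by notinE_tac.
  - by apply: (@meets_common _ _ pt _ _ (V 0)); rewrite !inE eqxx ?orbT.
  - apply: meets_signs; first by dst.
    + by dst.
    + by apply: ptneq; dst.
    + have -> : O (V 0) w x = O x (V 0) w by oreq.
      have -> : O (V 0) w (V 1) = - O (V 0) (V 1) w by oreq.
      by rewrite nmulr_rlt0 // oppr_gt0; apply: (@edgeV 0); dst.
    + have -> : O x (V 1) (V 0) = - O (V 0) (V 1) x by oreq.
      have -> : O x (V 1) w = O (V 1) w x by oreq.
      by rewrite pmulr_rlt0 // oppr_gt0; apply: (@edgeV 0); dst.
  - by apply: (@meets_common _ _ pt _ _ (V 0)); rewrite !inE eqxx ?orbT.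
-
  have hxak : O x (V 0) (V k) < 0 by move: hA; rewrite pmulr_llt0.
  have hac3w : 0 < O (V 0) (V 3) w.
    have id := or_bary (pt (V 0)) (pt (V 3)) (pt (V 1)) (pt (V 2)) (pt (V 3)) (pt w).
    rewrite or_abb mul0r addr0 in id.
    have s1 : O (V 1) (V 2) (V 3) < 0 by apply: conv3V; nlia.
    have s2 : 0 < O (V 0) (V 3) (V 1) by rewrite orS2 oppr_gt0; apply: conv3V; nlia.
    have s3 : orient (pt w) (pt (V 2)) (pt (V 3)) < 0.
      by rewrite orC; apply: (@edgeV 2); dst.
    have s4 : 0 < O (V 0) (V 3) (V 2) by rewrite orS2 oppr_gt0; apply: conv3V; nlia.
    have s5 : orient (pt (V 1)) (pt w) (pt (V 3)) < 0.
      by rewrite orS2 oppr_lt0.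
    have p1 : O (V 0) (V 3) (V 1) * orient (pt w) (pt (V 2)) (pt (V 3)) < 0.
      by rewrite pmulr_rlt0.
    have p2 : O (V 0) (V 3) (V 2) * orient (pt (V 1)) (pt w) (pt (V 3)) < 0.
      by rewrite pmulr_rlt0.
    have : O (V 0) (V 3) w * O (V 1) (V 2) (V 3) < 0.
      by rewrite id; lra.
    by rewrite nmulr_llt0.
  have f : forall u, u != V 0 -> u != V 1 -> 0 < - O (V 0) (V 1) u.
    by move=> u u1 u2; rewrite oppr_gt0; apply: (@edgeV 0).
  have hawk : O (V 0) w (V k) < 0.
    apply: (or_trans (e := pt (V 1)) (v := pt (V 3))) _ _ _ _ _.
    - by rewrite orS2 oppr_lt0.
    - apply: conv3V; nlia.
    - apply: f; dst.
    - apply: f; dst.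
    - apply: f; dst.
  have hawx : O (V 0) w x < 0.
    apply: (or_trans (e := pt (V 1)) (v := pt (V k))) hawk _ _ _ _.
    - have -> : O (V 0) (V k) x = O x (V 0) (V k) by oreq.
      done.
    - apply: f; dst.
    - apply: f; dst.
    - apply: f; dst.
  have : O (V 0) w x = O x (V 0) w by oreq.
  lra.
Qed.


Lemma pairE (r s a : 'I_n) : a \in [set r; s] -> r != s ->
  exists y, [set r; s] = [set a; y] /\ y != a.
Proof.
rewrite !inE => /orP[]/eqP <- rs; first by exists s; split => //; rewrite eq_sym.
by exists r; split => //; rewrite setUC.
Qed.

Lemma memE_sym p q : ([set p; q] \in Eseq) = ([set q; p] \in Eseq).
Proof. by rewrite setUC. Qed.

Definition Esol (S T : {set 'I_n}) :=
  exists2 e, e \in Eseq & (~ meets pt e S /\ ~ meets pt e T).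

Lemma Esol_sym S T : Esol S T -> Esol T S.
Proof. by case=> e he [h1 h2]; exists e. Qed.

Lemma inEseq_tac_helper (e : {set 'I_n}) : e \in Eseq -> e \in Eseq.
Proof. by []. Qed.

Ltac inEs := rewrite /Eseq !inE eqxx ?orbT //.

Lemma hA_common y : meets pt [set V 0; y] [set x; V 0] /\ meets pt [set V 0; y] [set V 0; V 1].
Proof. by split; apply: (@meets_common _ _ pt _ _ (V 0)); rewrite !inE eqxx ?orbT. Qed.

Lemma hB_common y : meets pt [set V 1; y] [set x; V 1] /\ meets pt [set V 1; y] [set V 0; V 1].
Proof. by split; apply: (@meets_common _ _ pt _ _ (V 1)); rewrite !inE eqxx ?orbT. Qed.

Lemma half_a_b z y : z != V 1 -> y != V 0 ->
  [set V 1; z] \notin Eseq -> [set V 0; y] \notin Eseq ->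
  meets pt [set V 1; z] [set V 0; y] -> Esol [set V 1; z] [set V 0; y].
Proof.
move=> z1 y0 hS hT hST.
have z0 : z != V 0 by apply: contraNneq hS => ->; rewrite memE_sym; inEs.
have zd2 : z != V (m - 2) by apply: contraNneq hS => ->; inEs.
have zd1 : z != V (m - 1) by apply: contraNneq hS => ->; inEs.
have y2 : y != V 2 by apply: contraNneq hT => ->; inEs.
have y3 : y != V 3 by apply: contraNneq hT => ->; inEs.
have y1 : y != V 1 by apply: contraNneq hT => ->; inEs.
have em : (m - 2).+1 = (m - 1)%N by nlia.
have hc : ~ meets pt [set V 2; V 3] [set V 0; y] by apply: (@edge_disj 2); dst.
case: (pselect (meets pt [set V 2; V 3] [set V 1; z])) => h23; last first.
  by exists [set V 2; V 3]; first inEs.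
have zc : (z == V 2) || (z == V 3).
  apply/negPn/negP; rewrite negb_or => /andP[a b].
  by have := @edge_disj 2 (V 1) z; apply => //; dst.
have hd : ~ meets pt [set V (m - 2); V (m - 1)] [set V 1; z].
  case/orP: zc => /eqP ->.
    by have := @edge_disj (m - 2) (V 1) (V 2); rewrite em; apply; dst.
  by have := @edge_disj (m - 2) (V 1) (V 3); rewrite em; apply; dst.
case: (pselect (meets pt [set V (m - 2); V (m - 1)] [set V 0; y])) => hdd; last first.
  by exists [set V (m - 2); V (m - 1)]; first inEs.
have yd : (y == V (m - 2)) || (y == V (m - 1)).
  apply/negPn/negP; rewrite negb_or => /andP[a b].
  by have := @edge_disj (m - 2) (V 0) y; rewrite em; apply => //; dst.
exfalso.
have [j [hj ez]] : exists j, ((j == 2) || (j == 3))%N /\ z = V j.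
  by case/orP: zc => /eqP ->; [exists 2%N | exists 3%N].
subst z.
have [k [hk ey]] : exists k, ((k == m - 2) || (k == m - 1))%N /\ y = V k.
  by case/orP: yd => /eqP ->; [exists (m - 2)%N | exists (m - 1)%N]; rewrite eqxx ?orbT.
subst y.
apply: (sep_lt (i := V 1) (j := V j) (T := [set V 0; V k])) hST.
have jk : (1 < j < k)%N /\ (k < m)%N by case/orP: hj => /eqP ->; case/orP: hk => /eqP ->; nlia.
case: jk => /andP [j1 jk] km.
move=> u; rewrite !inE => /orP[]/eqP->.
  by rewrite -orC; apply: conv3V => //; apply: ltn_trans km.
by apply: conv3V.
Qed.


Lemma em1 : (m - 2).+1 = (m - 1)%N.
Proof. lia. Qed.
Lemma em2 : (m - 1).+1 = m.
Proof. lia. Qed.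

Lemma dd_disj p q : p != V (m - 2) -> p != V (m - 1) -> q != V (m - 2) -> q != V (m - 1) ->
  ~ meets pt [set V (m - 2); V (m - 1)] [set p; q].
Proof. by move=> *; have := @edge_disj (m - 2) p q; rewrite em1; apply. Qed.

Lemma cc_disj p q : p != V 2 -> p != V 3 -> q != V 2 -> q != V 3 ->
  ~ meets pt [set V 2; V 3] [set p; q].
Proof. by move=> *; have := @edge_disj 2 p q; apply. Qed.

Lemma ab_disj p q : p != V 0 -> p != V 1 -> q != V 0 -> q != V 1 ->
  ~ meets pt [set V 0; V 1] [set p; q].
Proof. by move=> *; have := @edge_disj 0 p q; apply. Qed.

Lemma d1a_disj p q : p != V (m - 1) -> p != V 0 -> q != V (m - 1) -> q != V 0 ->
  ~ meets pt [set V (m - 1); V 0] [set p; q].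
Proof. by move=> *; have := @edge_disj (m - 1) p q; rewrite em2 Vm; apply. Qed.

Lemma bc2_disj p q : p != V 1 -> p != V 2 -> q != V 1 -> q != V 2 ->
  ~ meets pt [set V 1; V 2] [set p; q].
Proof. by move=> *; have := @edge_disj 1 p q; apply. Qed.

Lemma half_a_c_j j w y : (j == 2%N) || (j == 3%N) ->
  w != V 0 -> w != V 1 -> w != V j -> y != V 0 ->
  [set V j; w] \notin Eseq -> [set V 0; y] \notin Eseq ->
  meets pt [set V j; w] [set x; V 1] -> meets pt [set V j; w] [set V 0; y] ->
  ~ meets pt [set V 0; y] [set x; V 1] -> Esol [set V j; w] [set V 0; y].
Proof.
move=> hj w0 w1 wj y0 hS hT SB ST TB.
have jm : (1 < j < 4)%N by case/orP: hj => /eqP ->.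
have j0 : V j != V 0 by apply: Vneq; nlia.
have j1 : V j != V 1 by apply: Vneq; nlia.
have jd2 : V j != V (m - 2) by apply: Vneq; nlia.
have jd1 : V j != V (m - 1) by apply: Vneq; nlia.
have jx : V j != x by rewrite eq_sym xV.
have y1 : y != V 1 by apply: contraNneq hT => ->; inEs.
have y2 : y != V 2 by apply: contraNneq hT => ->; inEs.
have y3 : y != V 3 by apply: contraNneq hT => ->; inEs.
case: (pselect (meets pt [set V (m - 2); V (m - 1)] [set V j; w])) => hd.
  exfalso.
  have wd : (w == V (m - 2)) || (w == V (m - 1)).
    apply/negPn/negP; rewrite negb_or => /andP[a b].
    by apply: (dd_disj _ _ a b) hd; dst.
  have [k [hk ew]] : exists k, ((k == m - 2) || (k == m - 1))%N /\ w = V k.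
    by case/orP: wd => /eqP ->; [exists (m - 2)%N | exists (m - 1)%N]; rewrite eqxx ?orbT.
  subst w.
  by case: (alpha hj hk) => _ /(_ SB).
have wd2 : w != V (m - 2).
  apply: contra_notN hd => /eqP ->; apply: (@meets_common _ _ pt _ _ (V (m - 2)));
  by rewrite !inE eqxx ?orbT.
have wd1 : w != V (m - 1).
  apply: contra_notN hd => /eqP ->; apply: (@meets_common _ _ pt _ _ (V (m - 1)));
  by rewrite !inE eqxx ?orbT.
case: (pselect (meets pt [set V (m - 2); V (m - 1)] [set V 0; y])) => hdT; last first.
  by exists [set V (m - 2); V (m - 1)]; first inEs.
have yd : (y == V (m - 2)) || (y == V (m - 1)).
  apply/negPn/negP; rewrite negb_or => /andP[a b].
  by apply: (dd_disj _ _ a b) hdT; dst.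
exfalso.
case/orP: yd => /eqP ey; subst y.
- have w2 : w != V 2.
    case/orP: hj => /eqP ej; first by rewrite -ej.
    by apply: contraNneq hS => ->; rewrite ej memE_sym; inEs.
  have w3 : w != V 3.
    case/orP: hj => /eqP ej; last by rewrite -ej.
    by apply: contraNneq hS => ->; rewrite ej; inEs.
  exact: (G_a hj w0 w1 wd2 wd1 w2 w3 TB SB ST).
- apply: (d1a_disj (p := V j) (q := w)) => //.
  by apply: meets_sym; rewrite [[set V (m - 1); V 0]]setUC.
Qed.


Lemma half_b_c_k k w y : (k == m - 2)%N || (k == m - 1)%N ->
  w != V 0 -> w != V 1 -> w != V k -> y != V 1 -> y != V 0 ->
  [set V k; w] \notin Eseq -> [set V 1; y] \notin Eseq ->
  meets pt [set V k; w] [set x; V 0] -> meets pt [set V k; w] [set V 1; y] ->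
  ~ meets pt [set V 1; y] [set x; V 0] -> Esol [set V k; w] [set V 1; y].
Proof.
move=> hk w0 w1 wk y1 y0 hS hT SA ST TA.
have km : (3 < k < m)%N by case/orP: hk => /eqP ->; nlia.
have k0 : V k != V 0 by apply: Vneq; nlia.
have k1 : V k != V 1 by apply: Vneq; nlia.
have k2 : V k != V 2 by apply: Vneq; nlia.
have k3 : V k != V 3 by apply: Vneq; nlia.
have kx : V k != x by rewrite eq_sym xV.
have yd2 : y != V (m - 2) by apply: contraNneq hT => ->; inEs.
have yd1 : y != V (m - 1) by apply: contraNneq hT => ->; inEs.
case: (pselect (meets pt [set V 2; V 3] [set V k; w])) => hc.
  exfalso.
  have wc : (w == V 2) || (w == V 3).
    apply/negPn/negP; rewrite negb_or => /andP[a b].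
    by apply: (cc_disj _ _ a b) hc; dst.
  have [j [hj ew]] : exists j, ((j == 2) || (j == 3))%N /\ w = V j.
    by case/orP: wc => /eqP ->; [exists 2%N | exists 3%N].
  subst w.
  case: (alpha hj hk) => /(_ _) H _; apply: H.
  by rewrite setUC.
have w2 : w != V 2.
  apply: contra_notN hc => /eqP ->; apply: (@meets_common _ _ pt _ _ (V 2));
  by rewrite !inE eqxx ?orbT.
have w3 : w != V 3.
  apply: contra_notN hc => /eqP ->; apply: (@meets_common _ _ pt _ _ (V 3));
  by rewrite !inE eqxx ?orbT.
case: (pselect (meets pt [set V 2; V 3] [set V 1; y])) => hcT; last first.
  by exists [set V 2; V 3]; first inEs.
have yc : (y == V 2) || (y == V 3).
  apply/negPn/negP; rewrite negb_or => /andP[a b].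
  by apply: (cc_disj _ _ a b) hcT; dst.
exfalso.
case/orP: yc => /eqP ey; subst y.
- apply: (bc2_disj (p := V k) (q := w)) => //.
  exact: meets_sym.
- have wd2 : w != V (m - 2).
    case/orP: hk => /eqP ek; first by rewrite -ek.
    by apply: contraNneq hS => ->; rewrite ek memE_sym; inEs.
  have wd1 : w != V (m - 1).
    case/orP: hk => /eqP ek; last by rewrite -ek.
    by apply: contraNneq hS => ->; rewrite ek; inEs.
  exact: (G_b hk w0 w1 wd2 wd1 w2 w3 TA SA ST).
Qed.


Lemma notin2 (w p q a : 'I_n) : w \in [set p; q] -> p != a -> q != a -> w != a.
Proof. by rewrite !inE => /orP[]/eqP->. Qed.

Lemma half_a_c p q y : p != q -> p != V 0 -> p != V 1 -> q != V 0 -> q != V 1 -> y != V 0 ->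
  [set p; q] \notin Eseq -> [set V 0; y] \notin Eseq ->
  meets pt [set p; q] [set x; V 1] -> meets pt [set p; q] [set V 0; y] ->
  ~ meets pt [set V 0; y] [set x; V 1] -> Esol [set p; q] [set V 0; y].
Proof.
move=> pq p0 p1 q0 q1 y0 hS hT SB ST TB.
have y2 : y != V 2 by apply: contraNneq hT => ->; inEs.
have y3 : y != V 3 by apply: contraNneq hT => ->; inEs.
case: (pselect (meets pt [set V 2; V 3] [set p; q])) => hc; last first.
  exists [set V 2; V 3]; first inEs.
  by split => //; apply: cc_disj; dst.
have : (V 2 \in [set p; q]) || (V 3 \in [set p; q]).
  rewrite !inE; apply/negPn/negP; rewrite !negb_or => /andP[/andP[a b] /andP[c d]].
  rewrite ![V _ == _]eq_sym in a b c d.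
  exact: (cc_disj a c b d hc).
case/orP => hin.
- have [w [ew w2]] := pairE hin pq.
  have win : w \in [set p; q] by rewrite ew !inE eqxx orbT.
  have w0 := notin2 win p0 q0; have w1 := notin2 win p1 q1.
  rewrite ew in hS SB ST *.
  by apply: (@half_a_c_j 2 w y) => //; rewrite eq_sym.
- have [w [ew w3]] := pairE hin pq.
  have win : w \in [set p; q] by rewrite ew !inE eqxx orbT.
  have w0 := notin2 win p0 q0; have w1 := notin2 win p1 q1.
  rewrite ew in hS SB ST *.
  by apply: (@half_a_c_j 3 w y) => //; rewrite eq_sym.
Qed.

Lemma half_a p q y : p != q -> y != V 0 ->
  [set p; q] \notin Eseq -> [set V 0; y] \notin Eseq ->
  meets pt [set p; q] [set V 0; y] -> Esol [set p; q] [set V 0; y].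
Proof.
move=> pq y0 hS hT ST.
have TB : ~ meets pt [set V 0; y] [set x; V 1].
  move=> TB; case: (hA_common y) => TA TC.
  by apply: (@ii' (V 0) y) => //; rewrite eq_sym.
case: (pselect (meets pt [set p; q] [set x; V 1])) => SB; last first.
  exists [set x; V 1]; first inEs.
  by split => H; [apply: SB | apply: TB]; apply: meets_sym.
case: (boolP (V 0 \in [set p; q])) => h0.
  exfalso; have [z [ez z0]] := pairE h0 pq.
  rewrite ez in hS SB; case: (hA_common z) => SA SC.
  by apply: (@ii' (V 0) z) => //; rewrite eq_sym.
case: (boolP (V 1 \in [set p; q])) => h1.
  have [z [ez z1]] := pairE h1 pq.
  have z0 : z != V 0.
    apply: contraNneq h0 => e; by rewrite ez e !inE eqxx orbT.
  rewrite ez in hS ST *.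
  exact: half_a_b.
move: h0 h1; rewrite !inE !negb_or => /andP[p0 q0] /andP[p1 q1].
by apply: half_a_c => //; rewrite eq_sym.
Qed.



Lemma half_b_c p q y : p != q -> p != V 0 -> p != V 1 -> q != V 0 -> q != V 1 ->
  y != V 1 -> y != V 0 ->
  [set p; q] \notin Eseq -> [set V 1; y] \notin Eseq ->
  meets pt [set p; q] [set x; V 0] -> meets pt [set p; q] [set V 1; y] ->
  ~ meets pt [set V 1; y] [set x; V 0] -> Esol [set p; q] [set V 1; y].
Proof.
move=> pq p0 p1 q0 q1 y1 y0 hS hT SA ST TA.
have yd2 : y != V (m - 2) by apply: contraNneq hT => ->; inEs.
have yd1 : y != V (m - 1) by apply: contraNneq hT => ->; inEs.
case: (pselect (meets pt [set V (m - 2); V (m - 1)] [set p; q])) => hd; last first.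
  exists [set V (m - 2); V (m - 1)]; first inEs.
  by split => //; apply: dd_disj; dst.
have : (V (m - 2) \in [set p; q]) || (V (m - 1) \in [set p; q]).
  rewrite !inE; apply/negPn/negP; rewrite !negb_or => /andP[/andP[a b] /andP[c d]].
  rewrite ![V _ == _]eq_sym in a b c d.
  exact: (dd_disj a c b d hd).
case/orP => hin.
- have [w [ew w2]] := pairE hin pq.
  have win : w \in [set p; q] by rewrite ew !inE eqxx orbT.
  have w0 := notin2 win p0 q0; have w1 := notin2 win p1 q1.
  rewrite ew in hS SA ST *.
  by apply: (@half_b_c_k (m - 2)%N w y) => //; rewrite ?eqxx // eq_sym.
- have [w [ew w3]] := pairE hin pq.
  have win : w \in [set p; q] by rewrite ew !inE eqxx orbT.
  have w0 := notin2 win p0 q0; have w1 := notin2 win p1 q1.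
  rewrite ew in hS SA ST *.
  by apply: (@half_b_c_k (m - 1)%N w y) => //; rewrite ?eqxx ?orbT // eq_sym.
Qed.

Lemma half_b p q y : p != q -> y != V 1 -> y != V 0 -> p != V 0 -> q != V 0 ->
  [set p; q] \notin Eseq -> [set V 1; y] \notin Eseq ->
  meets pt [set p; q] [set V 1; y] -> Esol [set p; q] [set V 1; y].
Proof.
move=> pq y1 y0 p0 q0 hS hT ST.
have TA : ~ meets pt [set V 1; y] [set x; V 0].
  move=> TA; case: (hB_common y) => TB TC.
  by apply: (@ii' (V 1) y) => //; rewrite eq_sym.
case: (pselect (meets pt [set p; q] [set x; V 0])) => SA; last first.
  exists [set x; V 0]; first inEs.
  by split => H; [apply: SA | apply: TA]; apply: meets_sym.
case: (boolP (V 1 \in [set p; q])) => h1.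
  exfalso; have [z [ez z1]] := pairE h1 pq.
  rewrite ez in hS SA; case: (hB_common z) => SB SC.
  by apply: (@ii' (V 1) z) => //; rewrite eq_sym.
move: h1; rewrite !inE !negb_or => /andP[p1 q1].
by apply: half_b_c => //; rewrite eq_sym.
Qed.

Lemma common (S T : {set 'I_n}) : #|S| == 2%N -> #|T| == 2%N ->
  S \notin Eseq -> T \notin Eseq -> meets pt S T -> Esol S T.
Proof.
move=> /cards2P [p [q [pq ->]]] /cards2P [r [s [rs ->]]] hS hT ST.
case: (boolP (V 0 \in [set r; s])) => hT0.
  have [y [ey y0]] := pairE hT0 rs; rewrite ey in hT ST *.
  exact: half_a.
case: (boolP (V 0 \in [set p; q])) => hS0.
  have [y [ey y0]] := pairE hS0 pq; rewrite ey in hS ST *.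
  by apply: Esol_sym; apply: half_a => //; apply: meets_sym.
have [r0 s0] : r != V 0 /\ s != V 0 by move: hT0; rewrite !inE negb_or => /andP[a b]; rewrite ![_ == V 0]eq_sym.
have [p0 q0] : p != V 0 /\ q != V 0 by move: hS0; rewrite !inE negb_or => /andP[a b]; rewrite ![_ == V 0]eq_sym.
case: (boolP (V 1 \in [set r; s])) => hT1.
  have [y [ey y1]] := pairE hT1 rs.
  have y0 : y != V 0 by apply: (@notin2 y r s); rewrite // ey !inE eqxx orbT.
  rewrite ey in hT ST *.
  exact: half_b.
case: (boolP (V 1 \in [set p; q])) => hS1.
  have [y [ey y1]] := pairE hS1 pq.
  have y0 : y != V 0 by apply: (@notin2 y p q); rewrite // ey !inE eqxx orbT.
  rewrite ey in hS ST *.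
  by apply: Esol_sym; apply: half_b => //; apply: meets_sym.
have [r1 s1] : r != V 1 /\ s != V 1 by move: hT1; rewrite !inE negb_or => /andP[a b]; rewrite ![_ == V 1]eq_sym.
have [p1 q1] : p != V 1 /\ q != V 1 by move: hS1; rewrite !inE negb_or => /andP[a b]; rewrite ![_ == V 1]eq_sym.
exists [set V 0; V 1]; first inEs.
by split; apply: ab_disj.
Qed.


Lemma Eseq_card e : e \in Eseq -> #|e| == 2%N.
Proof.
rewrite /Eseq !inE.
by repeat (case/orP; [move/eqP->; rewrite cards2; neqV; done|]); move/eqP->; rewrite cards2; neqV.
Qed.

Definition Uset : {set segment n} := [set s : segment n | val s \notin Eseq].

Lemma Uset_mv : mv_set (Dgraph pt) Uset.
Proof.
move=> s t; rewrite /Uset !in_set => sU tU st.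
case: (pselect (meets pt (val s) (val t))) => hst; last first.
  exists [:: t]; split.
    split; first by split.
    case=> [|y q] [wq lq]; last by [].
    by move: st; rewrite /= in lq; rewrite lq eqxx.
  by move=> z; rewrite /= in_nil.
have [e eE [es et]] := common (valP s) (valP t) sU tU hst.
set es' : segment n := Sub e (Eseq_card eE).
exists [:: es'; t]; split.
  split.
    split.
      split; first by move=> H; apply: es; exact: meets_sym.
      by split.
    by [].
  case=> [|y [|y' q]] [wq lq] //=.
    by move: st; rewrite /= in lq; rewrite lq eqxx.
  rewrite /= in lq wq; case: wq => H _; exfalso; apply: H; by rewrite lq.
move=> z; rewrite /= inE => /eqP ->; by rewrite /Uset in_set /= negbK.
Qed.

Lemma mu_bound : ('C(n, 2) - 9 <= mu (Dgraph pt))%N.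
Proof.
have h1 : (#|Uset| <= mu (Dgraph pt))%N.
  rewrite /mu; apply: (@leq_bigmax_cond _ (fun U => `[< mv_set (Dgraph pt) U >]) (fun U => #|U|) Uset).
  by apply/asboolP; apply: Uset_mv.
apply: leq_trans h1.
have hT : #|{: segment n}| = 'C(n, 2).
  rewrite card_sig; have := card_draws ('I_n) 2; rewrite card_ord => <-.
  by apply: eq_card => A; rewrite !inE.
have hC : (#|~: Uset| <= 9)%N.
  have -> : ~: Uset = [set s : segment n | val s \in Eseq].
    by apply/setP => s; rewrite !inE negbK.
  rewrite -(card_imset _ val_inj).
  apply: (leq_trans (n := #|[pred S | S \in Eseq]|)).
    by apply: subset_leq_card; apply/subsetP => S /imsetP [s]; rewrite !inE => h ->.
  by apply: (leq_trans (card_size Eseq)).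
have := cardsC Uset; rewrite hT => e.
lia.
Qed.

End Main.

Theorem proposition12 (R : realType) (n : nat) (pt : 'I_n -> point R) :
  injective pt -> general_position pt -> (6 <= #|hull_idx pt|)%N ->
  has_good_triangle pt ->
  ('C(n, 2) - 9 <= mu (Dgraph pt))%N.
Proof.
move=> inj gp m6 [v [x [i [cw gt]]]].
exact: (mu_bound inj gp cw m6 gt).
Qed.
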